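(* Let $\varphi:\mathfrak{h}\to V^*$ be a complex factorization structure and $j\in\{1,\ldots,m\}$. Then for every $\ell\in\mathbb{P}(V_j)$ (not only generic ones) there exists $T\in\hat V_j^*$ such that $\varphi(\psi_j(\ell))$ is spanned by $\alpha\otimes T$, where $\alpha$ spans $\ell^0\subset V_j^*$ and is placed in the $j$-th slot.
   Context: $V_1,\ldots,V_m$ are 2-dimensional complex vector spaces, $V^*=V_1^*\otimes\cdots\otimes V_m^*$, $\hat V_j^*=\bigotimes_{r\neq j}V_r^*$, $\ell^0$ is the annihilator of $\ell$. $\Sigma^0_{j,\ell}=V_1^*\otimes\cdots\otimes\ell^0\otimes\cdots\otimes V_m^*$ ($\ell^0$ in slot $j$). A factorization structure of dimension $m$ is an injective linear map $\varphi:\mathfrak{h}\to V^*$, $\dim\mathfrak{h}=m+1$, with $\dim(\varphi(\mathfrak{h})\cap\Sigma^0_{j,\ell})=1$ for all $j$ and all $\ell$ in a nonempty Zariski-open subset of $\mathbb{P}(V_j)$. The $j$-th factorization curve $\psi_j:\mathbb{P}(V_j)\to\mathbb{P}(\mathfrak{h})$ is the unique regular extension to all of $\mathbb{P}(V_j)\cong\mathbb{P}^1$ of the generically defined regular map $\ell\mapsto\varphi^{-1}(\varphi(\mathfrak{h})\cap\Sigma^0_{j,\ell})$. *)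

(* Defs.v *)
From HB Require Import structures.
From mathcomp Require Import all_boot all_order all_algebra.
From mathcomp Require Import reals complex.
Unset Implicit Arguments.
Set Warnings "-notation-overridden,-ambiguous-paths".
Import Order.TTheory GRing.Theory Num.Theory.
Local Open Scope ring_scope.

Section FactorizationStructures.
Variable C : fieldType.

(* Coordinates: V_r = C^2 (basis e_0,e_1), V_r^* with the dual basis.
   A vector of V_j (or a functional of V_j^* ) is a function 'I_2 -> C. *)
Definition vec n := 'I_n -> C.
Definition vzero n : vec n := fun _ => 0.
Definition vscale n (c : C) (x : vec n) : vec n := fun k => c * x k.

Definition proj_eq n (x y : vec n) := exists c : C, c != 0 /\ y = vscale n c x.

(* V^* = V_1^* (x) ... (x) V_m^* : functions on multi-indices 'I_m -> 'I_2. *)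
Definition idx (m : nat) := {ffun 'I_m -> 'I_2}.
Definition tensor (m : nat) := idx m -> C.
Definition tzero m : tensor m := fun _ => 0.

(* \hat V_j^* = (x)_{r <> j} V_r^* : functions on multi-indices omitting slot j. *)
Definition hidx (m : nat) (j : 'I_m) := {ffun {x : 'I_m | x != j} -> 'I_2}.
Definition htensor m (j : 'I_m) := hidx m j -> C.
Definition restr m (j : 'I_m) (i : idx m) : hidx m j := [ffun x => i (val x)].

(* alpha (x) T, with alpha : V_j^* placed in the j-th slot, T in \hat V_j^* *)
Definition tens_at m (j : 'I_m) (alpha : vec 2) (T : htensor m j) : tensor m :=
  fun i => alpha (i j) * T (restr m j i).

(* alpha belongs to the annihilator ell^0 of the line ell = [v] *)
Definition annih (v alpha : vec 2) := alpha ord0 * v ord0 + alpha ord_max * v ord_max = 0.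

(* Sigma^0_{j,ell} = V_1^* (x) .. (x) ell^0 (x) .. (x) V_m^*  (ell = [v]).
   Since ell^0 is one-dimensional, this subspace is exactly the set of the
   tensors alpha (x) T with alpha in ell^0 and T in \hat V_j^*. *)
Definition Sigma0 m (j : 'I_m) (v : vec 2) (t : tensor m) :=
  exists (alpha : vec 2) (T : htensor m j), annih v alpha /\ t = tens_at m j alpha T.

(* h = C^{m+1}; a linear map phi : h -> V^* is given by the images of the
   standard basis vectors of h. *)
Definition phimap m (phi : 'I_m.+1 -> tensor m) (x : vec m.+1) : tensor m :=
  fun i => \sum_(k < m.+1) x k * phi k i.

Definition phi_injective m (phi : 'I_m.+1 -> tensor m) :=
  forall x : vec m.+1, phimap m phi x = tzero m -> x = vzero m.+1.

Definition spans m (S : tensor m -> Prop) (t : tensor m) :=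
  t <> tzero m /\ S t /\ forall s, S s -> exists c : C, s = (fun i => c * t i).

Definition dim_one m (S : tensor m -> Prop) := exists t, spans m S t.

Definition image_cap_Sigma m (phi : 'I_m.+1 -> tensor m) (j : 'I_m) (v : vec 2)
  (t : tensor m) := (exists x, t = phimap m phi x) /\ Sigma0 m j v t.

(* Zariski topology on P(V_j) = P^1.  A homogeneous form of degree d in the
   coordinates (v_0, v_1) is \sum_{k<=d} c_k v_0^k v_1^(d-k). *)
Definition form := (nat * (nat -> C))%type.
Definition eval_form (f : form) (v : vec 2) : C :=
  \sum_(k < f.1.+1) f.2 k * v ord0 ^+ k * v ord_max ^+ (f.1 - k).

(* Subsets of P^1 are predicates on nonzero vectors of C^2 (only their values
   on nonzero vectors matter).  Zariski-closed: common zero locus of a set of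
   homogeneous forms. *)
Definition zclosed (Z : vec 2 -> Prop) :=
  exists F : form -> Prop, forall v, v <> vzero 2 ->
    (Z v <-> forall f, F f -> eval_form f v = 0).
Definition zopen (U : vec 2 -> Prop) := zclosed (fun v => ~ U v).
Definition pnonempty (U : vec 2 -> Prop) := exists v, v <> vzero 2 /\ U v.

Definition factorization_structure m (phi : 'I_m.+1 -> tensor m) :=
  phi_injective m phi /\
  forall j : 'I_m, exists U, zopen U /\ pnonempty U /\
    forall v, v <> vzero 2 -> U v -> dim_one m (image_cap_Sigma m phi j v).

(* A map P^1 = P(V_j) -> P(h) = P^m, represented on nonzero vectors. *)
Definition proj_map m (psi : vec 2 -> vec m.+1) :=
  (forall v, v <> vzero 2 -> psi v <> vzero m.+1) /\
  (forall v c, v <> vzero 2 -> c != 0 -> proj_eq m.+1 (psi v) (psi (vscale 2 c v))).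

Definition regular_map m (psi : vec 2 -> vec m.+1) :=
  proj_map m psi /\
  forall v, v <> vzero 2 -> exists (U : vec 2 -> Prop) (d : nat) (c : 'I_m.+1 -> nat -> C),
    zopen U /\ U v /\
    forall w, w <> vzero 2 -> U w ->
      let Fw : vec m.+1 := fun k => eval_form (d, c k) w in
      Fw <> vzero m.+1 /\ proj_eq m.+1 Fw (psi w).

(* psi is the j-th factorization curve: a regular map on all of P(V_j) which,
   on a nonempty Zariski-open set, sends ell = [v] to the point
   phi^{-1}(phi(h) cap Sigma^0_{j,ell}) of P(h). *)
Definition factorization_curve m (phi : 'I_m.+1 -> tensor m) (j : 'I_m)
    (psi : vec 2 -> vec m.+1) :=
  regular_map m psi /\
  exists U, zopen U /\ pnonempty U /\
    forall v, v <> vzero 2 -> U v ->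
      spans m (image_cap_Sigma m phi j v) (phimap m phi (psi v)).

End FactorizationStructures.

(* Main.v *)
Require Import Defs.
From HB Require Import structures.
From mathcomp Require Import all_boot all_order all_algebra.
From mathcomp Require Import reals complex.
From Stdlib Require Import Classical FunctionalExtensionality.
Import Order.TTheory GRing.Theory Num.Theory.
Local Open Scope ring_scope.
Set Warnings "-notation-overridden,-ambiguous-paths".
From mathcomp Require Import ring.

Section PF.
Variable C : numFieldType.

Definition polyfun (g : C -> C) := exists p : {poly C}, forall t, g t = p.[t].

Lemma pf_const a : polyfun (fun _ => a).
Proof. by exists a%:P => t; rewrite hornerC. Qed.

Lemma pf_lin a b : polyfun (fun t => a + t * b).
Proof. by exists (a%:P + b%:P * 'X) => t; rewrite hornerD hornerC hornerM hornerC hornerX mulrC. Qed.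

Lemma pf_add g1 g2 : polyfun g1 -> polyfun g2 -> polyfun (fun t => g1 t + g2 t).
Proof. by move=> [p1 H1] [p2 H2]; exists (p1 + p2) => t; rewrite hornerD H1 H2. Qed.

Lemma pf_mul g1 g2 : polyfun g1 -> polyfun g2 -> polyfun (fun t => g1 t * g2 t).
Proof. by move=> [p1 H1] [p2 H2]; exists (p1 * p2) => t; rewrite hornerM H1 H2. Qed.

Lemma pf_exp g n : polyfun g -> polyfun (fun t => g t ^+ n).
Proof.
move=> Hg; elim: n => [|n IH]; first by exists 1 => t; rewrite expr0 hornerC.
have [p Hp] := pf_mul _ _ Hg IH; exists p => t; by rewrite exprS Hp.
Qed.

Lemma pf_sum n (G : 'I_n -> C -> C) : (forall k, polyfun (G k)) ->
  polyfun (fun t => \sum_(k < n) G k t).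
Proof.
elim: n G => [|n IH] G HG.
  by exists 0 => t; rewrite big_ord0 horner0.
have [p1 H1] := IH (fun k => G (widen_ord (leqnSn n) k)) (fun k => HG _).
have [p2 H2] := HG ord_max.
by exists (p1 + p2) => t; rewrite big_ord_recr /= hornerD H1 H2.
Qed.

Lemma poly_allroots_eq0 (p : {poly C}) : (forall t, p.[t] = 0) -> p = 0.
Proof.
move=> H; apply/eqP; apply/negPn/negP => pn0.
have Ha : all (root p) [seq i%:R | i <- iota 0 (size p)].
  by apply/allP => x _; apply/eqP/H.
have Hu : uniq [seq (i%:R : C) | i <- iota 0 (size p)].
  rewrite map_inj_uniq ?iota_uniq // => a b /eqP; rewrite eqr_nat => /eqP //.
have := max_poly_roots pn0 Ha Hu.
by rewrite size_map size_iota ltnn.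
Qed.

Lemma pf_nz g t0 : polyfun g -> g t0 <> 0 -> exists p : {poly C}, p != 0 /\ forall t, g t = p.[t].
Proof.
move=> [p Hp] H; exists p; split => //; apply/eqP => p0; apply: H; by rewrite Hp p0 horner0.
Qed.

Lemma pf_zero g q1 q2 q3 a1 a2 a3 : polyfun g -> polyfun q1 -> polyfun q2 -> polyfun q3 ->
  q1 a1 <> 0 -> q2 a2 <> 0 -> q3 a3 <> 0 ->
  (forall t, q1 t <> 0 -> q2 t <> 0 -> q3 t <> 0 -> g t = 0) -> forall t, g t = 0.
Proof.
move=> [pg Hg] P1 P2 P3 N1 N2 N3 H.
have [p1 [n1 H1]] := pf_nz _ _ P1 N1.
have [p2 [n2 H2]] := pf_nz _ _ P2 N2.
have [p3 [n3 H3]] := pf_nz _ _ P3 N3.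
have E : pg * p1 * p2 * p3 = 0.
  apply: poly_allroots_eq0 => t; rewrite !hornerM -Hg -H1 -H2 -H3.
  case: (eqVneq (q1 t) 0) => [->|e1]; first by rewrite mulr0 !mul0r.
  case: (eqVneq (q2 t) 0) => [->|e2]; first by rewrite mulr0 !mul0r.
  case: (eqVneq (q3 t) 0) => [->|e3]; first by rewrite mulr0.
  by rewrite H ?mul0r //; apply/eqP.
move=> t; rewrite Hg.
have /eqP -> : pg == 0.
  move/eqP: E; rewrite !mulf_eq0 (negbTE n1) (negbTE n2) (negbTE n3) !orbF //.
by rewrite horner0.
Qed.
End PF.
Section T.
Variable C : numFieldType.

Lemma pf_eval_form f (a b : vec C 2) :
  polyfun C (fun t => eval_form C f (fun k => a k + t * b k)).
Proof.
rewrite /eval_form; apply: pf_sum => k.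
apply: pf_mul; last by apply: pf_exp; apply: pf_lin.
apply: pf_mul; first exact: pf_const.
by apply: pf_exp; apply: pf_lin.
Qed.

Lemma zopen_form (U : vec C 2 -> Prop) p : zopen C U -> p <> vzero C 2 -> U p ->
  exists f, eval_form C f p <> 0 /\
    forall w, w <> vzero C 2 -> eval_form C f w <> 0 -> U w.
Proof.
move=> [F HF] pnz Up.
have : ~ (forall f, F f -> eval_form C f p = 0).
  by move=> H; apply: (proj2 (HF p pnz) H).
move=> /not_all_ex_not [f Hf]; exists f.
have [Ff fp] := imply_to_and _ _ Hf.
split=> // w wnz fw; apply: NNPP => nU.
by apply: fw; apply: (proj1 (HF w wnz) nU).
Qed.

Variable m : nat.
Variable j : 'I_m.

Definition ext (h : hidx m j) (a : 'I_2) : idx m :=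
  [ffun x => odflt a (omap h (insub x))].

Lemma ext_j h a : ext h a j = a.
Proof. by rewrite /ext ffunE insubF //= eqxx. Qed.

Lemma restr_ext h a : restr m j (ext h a) = h.
Proof. by apply/ffunP => x; rewrite ffunE /ext ffunE valK. Qed.

Lemma ext_restr i : ext (restr m j i) (i j) = i.
Proof.
apply/ffunP => x; rewrite /ext ffunE.
case: (eqVneq x j) => [->|xj]; first by rewrite insubF //= eqxx.
by rewrite insubT /= ffunE.
Qed.

Definition contr (t : tensor C m) (w : vec C 2) (h : hidx m j) :=
  w ord0 * t (ext h ord0) + w ord_max * t (ext h ord_max).

Lemma factA w t h : Sigma0 C m j w t -> contr t w h = 0.
Proof.
move=> [al [T [Ha ->]]]; rewrite /contr /tens_at !ext_j !restr_ext.
rewrite /annih in Ha.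
by rewrite mulrA mulrA -mulrDl [w ord0 * _]mulrC [w ord_max * _]mulrC Ha mul0r.
Qed.

Lemma vec2_nz (x : vec C 2) : x <> vzero C 2 -> x ord0 != 0 \/ x ord_max != 0.
Proof.
move=> H; case: (eqVneq (x ord0) 0) => h0; last by left.
case: (eqVneq (x ord_max) 0) => h1; last by right.
exfalso; apply: H; apply: functional_extensionality => k.
rewrite /vzero; case: k => [[|[|k]] Hk].
- by rewrite -h0; congr x; apply: val_inj.
- by rewrite -h1; congr x; apply: val_inj.
- by [].
Qed.

Lemma ord2_cases (a : 'I_2) : a = ord0 \/ a = ord_max.
Proof. case: a => [[|[|k]] Hk]; [left|right|by []]; by apply: val_inj. Qed.

Lemma factB (t : tensor C m) v alpha : v <> vzero C 2 -> alpha <> vzero C 2 ->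
  annih C v alpha -> (forall h, contr t v h = 0) ->
  exists T, t = tens_at C m j alpha T.
Proof.
move=> vnz anz Ha Hc.
have cross : forall h, alpha ord0 * t (ext h ord_max) = alpha ord_max * t (ext h ord0).
  move=> h; have Hh := Hc h; rewrite /contr in Hh; rewrite /annih in Ha.
  have E0 : v ord0 * (alpha ord0 * t (ext h ord_max) - alpha ord_max * t (ext h ord0)) = 0.
    transitivity (t (ext h ord_max) * (alpha ord0 * v ord0 + alpha ord_max * v ord_max)
       - alpha ord_max * (v ord0 * t (ext h ord0) + v ord_max * t (ext h ord_max))).
      by ring.
    by rewrite Ha Hh; ring.
  have E1 : v ord_max * (alpha ord0 * t (ext h ord_max) - alpha ord_max * t (ext h ord0)) = 0.
    transitivity (alpha ord0 * (v ord0 * t (ext h ord0) + v ord_max * t (ext h ord_max))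
       - t (ext h ord0) * (alpha ord0 * v ord0 + alpha ord_max * v ord_max)).
      by ring.
    by rewrite Ha Hh; ring.
  apply/eqP; rewrite -subr_eq0; apply/eqP.
  case: (vec2_nz _ vnz) => nz.
    by move/eqP: E0; rewrite mulf_eq0 (negbTE nz) /= => /eqP.
  by move/eqP: E1; rewrite mulf_eq0 (negbTE nz) /= => /eqP.
have gen : forall h a b, alpha b * t (ext h a) = alpha a * t (ext h b).
  move=> h0 a b.
  have c0 := cross h0.
  by case: (ord2_cases a) => ->; case: (ord2_cases b) => ->.
have [b nb] : exists b, alpha b != 0.
  by case: (vec2_nz _ anz) => nz; [exists ord0 | exists ord_max].
exists (fun h => t (ext h b) / alpha b).
apply: functional_extensionality => i; rewrite /tens_at.
rewrite -{1}(ext_restr i) mulrA -(gen (restr m j i) (i j) b).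
by rewrite mulrC mulrA mulVf // mul1r.
Qed.

Lemma phimap_scale (phi : 'I_m.+1 -> tensor C m) c x i :
  phimap C m phi (vscale C m.+1 c x) i = c * phimap C m phi x i.
Proof.
rewrite /phimap /vscale mulr_sumr; apply: eq_bigr => k _; by rewrite mulrA.
Qed.

Lemma contr_scale (t : tensor C m) c w h :
  contr (fun i => c * t i) w h = c * contr t w h.
Proof. rewrite /contr; ring. Qed.

End T.
Theorem proposition2p6 (R : realType) (m : nat)
  (phi : 'I_m.+1 -> tensor (complex R) m)
  (Hphi : factorization_structure (complex R) m phi)
  (j : 'I_m) (psi : vec (complex R) 2 -> vec (complex R) m.+1)
  (Hpsi : factorization_curve (complex R) m phi j psi) :
  forall v : vec (complex R) 2, v <> vzero (complex R) 2 ->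
  forall alpha : vec (complex R) 2,
    alpha <> vzero (complex R) 2 -> annih (complex R) v alpha ->
    exists T : htensor (complex R) m j,
      tens_at (complex R) m j alpha T <> tzero (complex R) m /\
      exists c : complex R,
        phimap (complex R) m phi (psi v) = (fun i => c * tens_at (complex R) m j alpha T i).
Proof.
set C := complex R.
move=> v vnz alpha anz Hann.
case: Hphi => Hinj _.
case: Hpsi => [[[Hnz Hsc] Hloc] [U0 [zo0 [[p0 [p0nz p0U]] Hsp]]]].
have [U1 [d [c [zo1 [U1v HF]]]]] := Hloc v vnz.
pose F := fun (w : vec C 2) => (fun k => eval_form C (d, c k) w) : vec C m.+1.
have Hlam : forall w, w <> vzero C 2 -> U1 w -> exists l : C, l != 0 /\
    forall i, phimap C m phi (psi w) i = l * phimap C m phi (F w) i.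
  move=> w wnz U1w; have [_ [l [ln0 E]]] := HF w wnz U1w.
  exists l; split => // i; rewrite E; exact: phimap_scale.
pose w := fun (t : C) => (fun k => v k + t * (p0 k - v k)) : vec C 2.
have [f0 [f0p Hf0]] := zopen_form _ _ _ zo0 p0nz p0U.
have [f1 [f1v Hf1]] := zopen_form _ _ _ zo1 vnz U1v.
have [i0 vi0] : exists i0, v i0 != 0.
  by case: (vec2_nz _ _ vnz) => nz; [exists ord0 | exists ord_max].
have w1 : w 1 = p0.
  by apply: functional_extensionality => k; rewrite /w mul1r addrC subrK.
have w0 : w 0 = v.
  by apply: functional_extensionality => k; rewrite /w mul0r addr0.
have Hz : forall h t, contr C m j (phimap C m phi (F (w t))) (w t) h = 0.
  move=> h.
  apply: (pf_zero C _ (fun t => eval_form C f0 (w t)) (fun t => eval_form C f1 (w t))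
            (fun t => w t i0) 1 0 0).
  - rewrite /contr /phimap /F /w.
    apply: pf_add; apply: pf_mul; try apply: pf_lin;
      apply: pf_sum => k; apply: pf_mul; try apply: pf_const; apply: pf_eval_form.
  - exact: pf_eval_form.
  - exact: pf_eval_form.
  - exact: pf_lin.
  - by rewrite /= w1.
  - by rewrite /= w0.
  - by rewrite /= w0; apply/eqP.
  move=> t n0 n1 n2.
  have wnz : w t <> vzero C 2 by move=> E; apply: n2; rewrite E.
  have U0w := Hf0 _ wnz n0.
  have U1w := Hf1 _ wnz n1.
  have [l [ln0 El]] := Hlam _ wnz U1w.
  have [_ [[_ Sg] _]] := Hsp _ wnz U0w.
  have := factA C m j _ _ h Sg.
  have -> : phimap C m phi (psi (w t)) = (fun i => l * phimap C m phi (F (w t)) i).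
    exact: functional_extensionality.
  rewrite contr_scale => /eqP; rewrite mulf_eq0 (negbTE ln0) /= => /eqP //.
have [l [ln0 El]] := Hlam v vnz U1v.
have Ep : phimap C m phi (psi v) = (fun i => l * phimap C m phi (F v) i).
  exact: functional_extensionality.
have Hc : forall h, contr C m j (phimap C m phi (psi v)) v h = 0.
  move=> h; rewrite Ep contr_scale.
  by have := Hz h 0; rewrite w0 => ->; rewrite mulr0.
have [T ET] := factB C m j _ _ _ vnz anz Hann Hc.
exists T; split.
  rewrite -ET => H0; apply: (Hnz v vnz); exact: Hinj.
exists 1; rewrite -ET; apply: functional_extensionality => i; by rewrite mul1r.
Qed.
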